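(* Let $T$ be an $n$-simplex with vertices $\texttt v_0,\dots,\texttt v_n$, let $m\ge0$ and $k\ge 2m+1$, and let $i\in\{0,\dots,n\}$. Then the space $$\mathbb P_k(D(\texttt v_i,m))=\mathrm{span}\Big\{\lambda^\alpha:\alpha\in\mathbb T^n_k,\ \sum_{j\ne i}\alpha_j\le m\Big\}$$ is uniquely determined by the values $D^\beta u(\texttt v_i)$, $\beta\in\mathbb N^n$, $|\beta|\le m$; that is, the linear map $u\mapsto (D^\beta u(\texttt v_i))_{|\beta|\le m}$ is a bijection from this space onto $\mathbb R^{N}$ with $N=\#\{\beta\in\mathbb N^n:|\beta|\le m\}$.
   Context: $\lambda_0,\dots,\lambda_n$ are the barycentric coordinates of $T$; $\mathbb N$ includes $0$; $\mathbb T^n_k=\{\alpha\in\mathbb N^{n+1}:\sum_j\alpha_j=k\}$; $\lambda^\alpha=\prod_j\lambda_j^{\alpha_j}$; $D^\beta=\partial^{|\beta|}/\partial x_1^{\beta_1}\cdots\partial x_n^{\beta_n}$. *)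

(* Defs.v *)
From mathcomp Require Import all_boot all_order all_algebra.
From mathcomp Require Import mpoly.
Set Implicit Arguments. Unset Strict Implicit. Unset Printing Implicit Defensive.
Import Order.TTheory GRing.Theory Num.Theory.
Local Open Scope ring_scope.

Definition simplex (R : realFieldType) (n : nat) (v : 'I_n.+1 -> 'I_n -> R) : Prop :=
  (\matrix_(j < n, l < n) (v (lift ord0 j) l - v ord0 l)) \in unitmx.

Definition barycentric (R : realFieldType) (n : nat) (v : 'I_n.+1 -> 'I_n -> R)
    (lam : 'I_n.+1 -> {mpoly R[n]}) : Prop :=
  \sum_(j < n.+1) lam j = 1 /\
  forall l : 'I_n, \sum_(j < n.+1) (v j l) *: lam j = 'X_l.

Definition lampow (R : realFieldType) (n : nat) (lam : 'I_n.+1 -> {mpoly R[n]})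
    (a : 'X_{1..n.+1}) : {mpoly R[n]} :=
  \prod_(j < n.+1) lam j ^+ a j.

Definition idxD (n : nat) (k : nat) (i : 'I_n.+1) (m : nat) (a : 'X_{1..n.+1}) : bool :=
  (mdeg a == k)%N && (\sum_(j < n.+1 | j != i) a j <= m)%N.

Definition PkD (R : realFieldType) (n : nat) (lam : 'I_n.+1 -> {mpoly R[n]})
    (k : nat) (i : 'I_n.+1) (m : nat) (u : {mpoly R[n]}) : Prop :=
  exists s : seq (R * 'X_{1..n.+1}),
    all (fun p => idxD k i m p.2) s /\
    u = \sum_(p <- s) p.1 *: lampow lam p.2.

(* Main.v *)
Require Import Defs.
From mathcomp Require Import all_boot all_order all_algebra.
From mathcomp Require Import mpoly.
From mathcomp Require Import ring.
Import Order.TTheory GRing.Theory Num.Theory.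
Local Open Scope ring_scope.
Set Implicit Arguments. Unset Strict Implicit. Unset Printing Implicit Defensive.

Section Main.
Variables (R : realFieldType) (n : nat) (v : 'I_n.+1 -> 'I_n -> R)
    (lam : 'I_n.+1 -> {mpoly R[n]}) (m k : nat) (i : 'I_n.+1).
Hypothesis Hs : simplex v.
Hypothesis Hb : barycentric v lam.
Hypothesis Hk : (m <= k)%N.

Lemma bary_uniq_scalar (d : 'I_n.+1 -> R) :
  \sum_j d j = 0 -> (forall l, \sum_j v j l * d j = 0) -> forall j, d j = 0.
Proof.
move=> H0 H1.
set M := \matrix_(j < n, l < n) (v (lift ord0 j) l - v ord0 l).
have Hr : (\row_j d (lift ord0 j)) *m M = 0.
  apply/rowP => l; rewrite !mxE.
  have := H1 l; rewrite big_ord_recl => E1.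
  have E0 := H0; rewrite big_ord_recl in E0.
  have -> : \sum_j (\row_j0 d (lift ord0 j0)) 0 j * M j l
     = \sum_j (v (lift ord0 j) l * d (lift ord0 j)) - (\sum_j d (lift ord0 j)) * v ord0 l.
    rewrite mulr_suml -sumrB; apply: eq_bigr => j _; rewrite !mxE; ring.
  have -> : \sum_j d (lift ord0 j) = - d ord0 by apply/eqP; rewrite -addr_eq0 addrC E0 eqxx.
  by rewrite mulNr opprK addrC [d ord0 * _]mulrC.
have Hz : \row_j d (lift ord0 j) = 0 :> 'rV_n.
  by rewrite -(mulmxK Hs (\row_j d (lift ord0 j))) Hr mul0mx.
have Hl : forall j, d (lift ord0 j) = 0.
  by move=> j; have := congr1 (fun A : 'rV_n => A 0 j) Hz; rewrite !mxE.
move=> j; case: (unliftP ord0 j) => [j' ->|->]; first exact: Hl.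
by move: H0; rewrite big_ord_recl big1 ?addr0 // => j' _; rewrite Hl.
Qed.

Lemma bary_uniq (c : 'I_n.+1 -> {mpoly R[n]}) :
  \sum_j c j = 0 -> (forall l, \sum_j v j l *: c j = 0) -> forall j, c j = 0.
Proof.
move=> H0 H1 j; apply/mpolyP => b; rewrite raddf0.
apply: (bary_uniq_scalar (d := fun j => (c j)@_b)).
  have := congr1 (mcoeff b) H0; rewrite raddf_sum => ->; exact: mcoeff0.
move=> l; have E := congr1 (mcoeff b) (H1 l); rewrite raddf_sum mcoeff0 in E.
rewrite -[RHS]E; apply: eq_bigr => j' _; exact: (esym (mcoeffZ _ _ _)).
Qed.

Definition w (j l : 'I_n) : R := v (lift i j) l - v i l.
Definition phi (l : 'I_n) : {mpoly R[n]} := (v i l)%:MP + \sum_(j < n) w j l *: 'X_j.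
Definition lq : n.-tuple {mpoly R[n]} := [tuple phi l | l < n].
Definition S : {mpoly R[n]} := \sum_(j < n) 'X_j.
Definition mu (j : 'I_n.+1) : {mpoly R[n]} := oapp (fun j' => 'X_j') (1 - S) (unlift i j).

Lemma mu_i : mu i = 1 - S. Proof. by rewrite /mu unlift_none. Qed.
Lemma mu_lift j : mu (lift i j) = 'X_j. Proof. by rewrite /mu liftK. Qed.

Lemma sum_split (V : nmodType) (F : 'I_n.+1 -> V) :
  \sum_j F j = F i + \sum_(j<n) F (lift i j).
Proof. by rewrite (bigD1_ord i). Qed.

Lemma prod_split (V : comRingType) (F : 'I_n.+1 -> V) :
  \prod_j F j = F i * \prod_(j<n) F (lift i j).
Proof. by rewrite (bigD1_ord i). Qed.

Lemma lq_nth (l : 'I_n) : lq`_l = phi l.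
Proof. by rewrite -tnth_nth tnth_mktuple. Qed.

Lemma Phi_lam j : lam j \mPo lq = mu j.
Proof.
case: Hb => B0 B1.
apply/eqP; rewrite -subr_eq0; apply/eqP; move: j.
apply: bary_uniq.
  rewrite sumrB.
  have -> : \sum_j (lam j \mPo lq) = (\sum_j lam j) \mPo lq by rewrite raddf_sum.
  rewrite B0 comp_mpoly1 sum_split mu_i (eq_bigr _ (fun j _ => mu_lift j)) -/S.
  by rewrite addrNK subrr.
move=> l; under eq_bigr do rewrite scalerBr; rewrite sumrB.
have -> : \sum_j v j l *: (lam j \mPo lq) = (\sum_j v j l *: lam j) \mPo lq.
  by rewrite raddf_sum; apply: eq_bigr => j _; exact: (esym (comp_mpolyZ _ _ _)).
rewrite B1 comp_mpolyXU lq_nth sum_split mu_i; under eq_bigr do rewrite mu_lift.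
rewrite /phi /w.
rewrite (eq_bigr (fun j => v (lift i j) l *: 'X_j - v i l *: 'X_j)); last first.
  by move=> j _; rewrite scalerBl.
rewrite sumrB -scaler_sumr -/S -alg_mpolyC scalerBr.
ring.
Qed.

Lemma mderivXU (l l' : 'I_n) : mderiv l' ('X_l : {mpoly R[n]}) = ((l == l')%:R)%:MP.
Proof.
rewrite mderivX mnm1E; case: eqP => [->|_].
  have -> : (U_(l') - U_(l'))%MM = 0%MM by apply/mnmP => x; rewrite !mnmE subnn.
  by rewrite mpolyX0 scale1r mpolyC1.
by rewrite scale0r mpolyC0.
Qed.

Section Chain.
Variable lq0 : n.-tuple {mpoly R[n]}.
Definition Pch (p : {mpoly R[n]}) := forall j,
  mderiv j (p \mPo lq0) = \sum_(l < n) mderiv j (tnth lq0 l) * (mderiv l p \mPo lq0).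

Lemma Pch_C c : Pch c%:MP.
Proof.
move=> j; rewrite comp_mpolyC mderivC big1 // => l _.
by rewrite mderivC comp_mpoly0 mulr0.
Qed.

Lemma Pch_X l : Pch 'X_l.
Proof.
move=> j; rewrite comp_mpolyXU -tnth_nth (bigD1 l) //= big1 ?addr0.
  by rewrite mderivXU eqxx mpolyC1 comp_mpoly1 mulr1.
by move=> l' /negbTE nl; rewrite mderivXU eq_sym nl mpolyC0 comp_mpoly0 mulr0.
Qed.

Lemma Pch_D p q : Pch p -> Pch q -> Pch (p + q).
Proof.
move=> Hp Hq j; rewrite raddfD mderivD Hp Hq -big_split /=.
by apply: eq_bigr => l _; rewrite mderivD raddfD mulrDr.
Qed.

Lemma Pch_M p q : Pch p -> Pch q -> Pch (p * q).
Proof.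
move=> Hp Hq j; rewrite rmorphM mderivM Hp Hq mulr_suml mulr_sumr -big_split /=.
apply: eq_bigr => l _; rewrite mderivM raddfD /= !(rmorphM (comp_mpoly lq0)); ring.
Qed.

Lemma chain p : Pch p.
Proof.
elim/mpolyind: p => [|c mm p _ _ Hp].
  by rewrite -mpolyC0; apply: Pch_C.
apply: Pch_D => //; rewrite -mul_mpolyC; apply: Pch_M; first exact: Pch_C.
rewrite mpolyXE_id; apply: big_ind => //.
- by rewrite -mpolyC1; apply: Pch_C.
- exact: Pch_M.
move=> l _; elim: (mm l) => [|e IH]; first by rewrite expr0 -mpolyC1; apply: Pch_C.
by rewrite exprS; apply: Pch_M => //; apply: Pch_X.
Qed.
End Chain.

Lemma dphi j l : mderiv j (tnth lq l) = (w j l)%:MP.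
Proof.
rewrite tnth_mktuple /phi mderivD mderivC add0r raddf_sum (bigD1 j) //= big1 ?addr0.
  by rewrite mderivZ mderivXU ?eqxx mpolyC1 -alg_mpolyC.
by move=> j' /negbTE nj; rewrite mderivZ mderivXU nj mpolyC0 scaler0.
Qed.

Lemma coef0_eval (q : {mpoly R[n]}) : q@_0 = q.@[fun _ => 0].
Proof.
elim/mpolyind: q => [|c mm p _ _ Hp]; first by rewrite mcoeff0 meval0.
rewrite mcoeffD mevalD Hp mcoeffZ mevalZ mcoeffX mevalX; congr (_ * _ + _).
case: (eqVneq mm 0%MM) => [->|nz].
  rewrite big1 //= => l _; by rewrite mnm0E expr0.

case: (pickP (fun l => mm l != 0%N)) => [l Hl|H0]; last first.
  by case/eqP: nz; apply/mnmP => l; rewrite mnm0E; move/negbFE/eqP: (H0 l).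
by rewrite (bigD1 l) //= expr0n (negbTE Hl) mul0r.
Qed.

Lemma eval_phi l : (tnth lq l).@[fun _ => 0] = v i l.
Proof.
rewrite tnth_mktuple /phi mevalD mevalC raddf_sum big1 ?addr0 //= => j _.
by rewrite mevalZ mevalXU mulr0.
Qed.

Lemma Z0 p : (p^`M[0%MM]).@[v i] = 0 -> (p \mPo lq)@_0 = 0.
Proof.
rewrite mderivm0m => H; rewrite coef0_eval comp_mpoly_meval -[RHS]H.
by apply: meval_eq => l; rewrite eval_phi.
Qed.

Lemma Zclaim M : forall p, (forall b, (mdeg b <= M)%N -> (p^`M[b]).@[v i] = 0) ->
  forall bb, (mdeg bb <= M)%N -> (p \mPo lq)@_bb = 0.
Proof.
elim: M => [|M IH] p Hp bb Hbb.
  move: Hbb; rewrite leqn0 mdeg_eq0 => /eqP ->; apply: Z0; apply: Hp.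
  by rewrite mdeg0.
case: (eqVneq bb 0%MM) => [->|nz].
  by apply: Z0; apply: Hp; rewrite mdeg0.
case: (pickP (fun l => bb l != 0%N)) => [j Hj|H0]; last first.
  by case/eqP: nz; apply/mnmP => l; rewrite mnm0E; move/negbFE/eqP: (H0 l).
set b' := (bb - U_(j))%MM.
have Ebb : bb = (b' + U_(j))%MM by rewrite submK // lep1mP.
have Hb' : (mdeg b' <= M)%N by move: Hbb; rewrite Ebb mdegD mdeg1 addn1.
have := mcoeff_deriv j b' (p \mPo lq); rewrite -Ebb chain.
rewrite raddf_sum big1 /=; last first.
  move=> l _; rewrite dphi mul_mpolyC mcoeffZ (IH (mderiv l p)) ?mulr0 //.
  move=> b Hb0; rewrite -mderivmU1m -mderivmDm; apply: Hp.
  by rewrite mdegD mdeg1 add1n ltnS.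
move/eqP; rewrite eq_sym mulrn_eq0 /= => /eqP //.
Qed.

Definition alpha (g : 'X_{1..n}) : 'X_{1..n.+1} :=
  [multinom oapp g (k - mdeg g)%N (unlift i j) | j < n.+1].
Lemma alpha_i g : alpha g i = (k - mdeg g)%N.
Proof. by rewrite mnmE unlift_none. Qed.
Lemma alpha_lift g j : alpha g (lift i j) = g j.
Proof. by rewrite mnmE liftK. Qed.
Definition e g := lampow lam (alpha g).

Lemma Phi_e g : e g \mPo lq = (1 - S) ^+ (k - mdeg g) * 'X_[g].
Proof.
rewrite /e /lampow (rmorph_prod (comp_mpoly lq)) prod_split /=.
have XX : forall (p : {mpoly R[n]}) a, (p ^+ a) \mPo lq = (p \mPo lq) ^+ a by move=> p a; exact: rmorphXn.
rewrite XX Phi_lam mu_i alpha_i mpolyXE_id; congr (_ * _).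
by apply: eq_bigr => j _; rewrite XX Phi_lam mu_lift alpha_lift.
Qed.

Lemma mcoeffMX0 (p : {mpoly R[n]}) g bb : ~~ (g <= bb)%MM -> (p * 'X_[g])@_bb = 0.
Proof.
move=> nle; elim/mpolyind: p => [|c mm p _ _ Hp]; first by rewrite mul0r mcoeff0.
rewrite mulrDl mcoeffD Hp addr0 -scalerAl mcoeffZ -mpolyXD mcoeffX.
case: eqP => [E|_]; last by rewrite mulr0.
by case/negP: nle; apply/mnm_lepP => x; rewrite -E mnmDE leq_addl.
Qed.

Lemma coefPhiE g bb r : ((1 - S) ^+ r * 'X_[g])@_bb =
  if (g <= bb)%MM then ((1 - S) ^+ r)@_(bb - g) else 0.
Proof.
case: ifP => H; last by rewrite mcoeffMX0 ?H.
by rewrite -{1}(submK H) addmC mcoeffMX.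
Qed.

Lemma coef0_1S r : ((1 - S) ^+ r)@_0 = 1.
Proof.
rewrite (rmorphXn (mcoeff 0%MM)) /= raddfB /= (rmorph1 (mcoeff 0%MM)) /S raddf_sum /=.
rewrite big1 ?subr0 ?expr1n // => j _; rewrite mcoeffX.
by case: eqP => // /(congr1 mdeg); rewrite mdeg1 mdeg0.
Qed.

Lemma le_mdeg_eq (g b : 'X_{1..n}) : (g <= b)%MM -> (mdeg b <= mdeg g)%N -> g = b.
Proof.
move=> le; rewrite -(submK le) mdegD => H.
have : mdeg (b - g)%MM == 0%N by rewrite -leqn0 -(leq_add2r (mdeg g)) add0n.
by rewrite mdeg_eq0 => /eqP ->; rewrite add0m.
Qed.

Lemma mcoeff_sumZ (I : finType) (c : I -> R) (F : I -> {mpoly R[n]}) bb :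
  (\sum_r c r *: F r)@_bb = \sum_r c r * (F r)@_bb.
Proof. by rewrite raddf_sum; apply: eq_bigr => r _; exact: mcoeffZ. Qed.

Lemma comp_sumZ (I : finType) (c : I -> R) (F : I -> {mpoly R[n]}) :
  (\sum_r c r *: F r) \mPo lq = \sum_r c r *: (F r \mPo lq).
Proof. by rewrite raddf_sum; apply: eq_bigr => r _; exact: comp_mpolyZ. Qed.

Lemma deval_sumZ (I : finType) (c : I -> R) (F : I -> {mpoly R[n]}) b x :
  ((\sum_r c r *: F r)^`M[b]).@[x] = \sum_r c r * ((F r)^`M[b]).@[x].
Proof.
rewrite raddf_sum raddf_sum; apply: eq_bigr => r _.
change (meval x (mderivm b (c r *: F r)) = c r * meval x (mderivm b (F r))); by rewrite mderivmZ mevalZ.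
Qed.

Definition G := 'X_{1..n < m.+1}.
Definition N := #|{: G}|.
Definition gr (r : 'I_N) : 'X_{1..n} := bmnm (enum_val r).

Lemma gr_deg r : (mdeg (gr r) <= m)%N.
Proof. by rewrite -ltnS; apply: bmdeg. Qed.

Lemma gr_inj : injective gr.
Proof. by move=> r1 r2 /val_inj /enum_val_inj. Qed.

Lemma injE (c : 'I_N -> R) :
  (forall b, (mdeg b <= m)%N -> ((\sum_r c r *: e (gr r))^`M[b]).@[v i] = 0) ->
  forall r, c r = 0.
Proof.
move=> H.
have Zc : forall r0, \sum_r c r * ((1 - S) ^+ (k - mdeg (gr r)) * 'X_[gr r])@_(gr r0) = 0.
  move=> r0; rewrite -[RHS](Zclaim H (gr_deg r0)) comp_sumZ mcoeff_sumZ.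
  by apply: eq_bigr => r _; rewrite Phi_e.
suff HH : forall s r, (mdeg (gr r) < s)%N -> c r = 0.
  by move=> r; apply: (HH (mdeg (gr r)).+1).
elim=> [|s IHs] r Hr; first by [].
case: (ltnP (mdeg (gr r)) s) => [lt|ge]; first exact: IHs.
have := Zc r; rewrite (bigD1 r) //= big1 ?addr0.
  rewrite coefPhiE lepm_refl.
  have -> : (gr r - gr r)%MM = 0%MM by apply/mnmP => x; rewrite !mnmE subnn.
  by rewrite coef0_1S mulr1.
move=> r' nr'; rewrite coefPhiE; case: ifP => le; last by rewrite mulr0.
case: (ltnP (mdeg (gr r')) s) => [lt|ge']; first by rewrite IHs ?mul0r.
have Hr' : (mdeg (gr r) <= s)%N by rewrite -ltnS.
have E := le_mdeg_eq le (leq_trans Hr' ge').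
by case/negP: nr'; rewrite (gr_inj E).
Qed.

Definition A : 'M[R]_N := \matrix_(r, s) ((e (gr r))^`M[gr s]).@[v i].

Lemma cA (c : 'rV[R]_N) s : (c *m A) 0 s = ((\sum_r c 0 r *: e (gr r))^`M[gr s]).@[v i].
Proof. by rewrite mxE deval_sumZ; apply: eq_bigr => r _; rewrite mxE. Qed.

Lemma rank_of b : (mdeg b <= m)%N -> exists s, gr s = b.
Proof.
move=> H; have H' : (mdeg b < m.+1)%N by rewrite ltnS.
by exists (enum_rank (@BMultinom n m.+1 b H')); rewrite /gr enum_rankK.
Qed.

Lemma kerA (c : 'rV[R]_N) : c *m A = 0 -> c = 0.
Proof.
move=> H; apply/rowP => r; rewrite mxE.
apply: (injE (c := fun r => c 0 r)) => b Hb0.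
have [s <-] := rank_of Hb0; by rewrite -cA H mxE.
Qed.

Lemma Aunit : A \in unitmx.
Proof.
rewrite -row_free_unit -kermx_eq0; apply/eqP/row_matrixP => r; rewrite row0.
by apply: kerA; apply/sub_kermxP; exact: row_sub.
Qed.

Definition gam (a : 'X_{1..n.+1}) : 'X_{1..n} := [multinom a (lift i j) | j < n].

Lemma mdeg_gam a : mdeg a = (a i + mdeg (gam a))%N.
Proof.
rewrite !mdegE (bigD1_ord i) //=; congr (_ + _)%N.
by apply: eq_bigr => j _; rewrite mnmE.
Qed.

Lemma sum_ne_gam (a : 'X_{1..n.+1}) : (\sum_(j < n.+1 | j != i) a j)%N = mdeg (gam a).
Proof.
by apply/eqP; rewrite -(eqn_add2l (a i)) -mdeg_gam mdegE [X in _ == X](bigD1 i).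
Qed.

Lemma alpha_gam a : mdeg a = k -> alpha (gam a) = a.
Proof.
move=> H; apply/mnmP => j; rewrite mnmE.
case: (unliftP i j) => [j' ->|->] /=; first by rewrite mnmE.
by rewrite -H mdeg_gam addnK.
Qed.

Lemma idx_alpha g : (mdeg g <= m)%N -> idxD k i m (alpha g).
Proof.
move=> H; rewrite /idxD sum_ne_gam.
have Eg : gam (alpha g) = g by apply/mnmP => j; rewrite mnmE alpha_lift.
rewrite Eg H andbT mdeg_gam alpha_i Eg subnK //; exact: leq_trans H Hk.
Qed.

Definition rk (p : R * 'X_{1..n.+1}) : 'I_N := enum_rank (insubd (@bm0 n m) (gam p.2) : G).

Lemma rkE p : idxD k i m p.2 -> lampow lam p.2 = e (gr (rk p)).
Proof.
case/andP => /eqP H1 H2; rewrite /e /gr /rk enum_rankK insubdK ?alpha_gam //.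
by rewrite -topredE /= ltnS -sum_ne_gam.
Qed.

Lemma grouping (sq : seq (R * 'X_{1..n.+1})) : all (fun p => idxD k i m p.2) sq ->
  exists d : 'rV[R]_N, \sum_(p <- sq) p.1 *: lampow lam p.2 = \sum_r d 0 r *: e (gr r).
Proof.
move=> Hall; exists (\row_r \sum_(p <- sq | rk p == r) p.1).
rewrite big_seq (eq_bigr (fun p => \sum_(r | r == rk p) p.1 *: e (gr r))); last first.
  move=> p Hp; rewrite big_pred1_eq rkE //; exact: (allP Hall).
rewrite -big_seq.
under [RHS]eq_bigr do rewrite mxE scaler_suml.
rewrite (exchange_big_dep predT) //=.
by apply: eq_bigr => r _; apply: eq_bigl => p; rewrite eq_sym.
Qed.

Lemma main_sec (f : 'X_{1..n} -> R) :
  exists! u : {mpoly R[n]},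
    PkD lam k i m u /\
    forall b : 'X_{1..n}, (mdeg b <= m)%N -> (mderivm b u).@[v i] = f b.
Proof.
pose F : 'rV[R]_N := \row_s f (gr s).
pose c := F *m invmx A.
have cAF : c *m A = F by rewrite /c mulmxKV // Aunit.
exists (\sum_r c 0 r *: e (gr r)); split.
  split.
    exists [seq (c 0 r, alpha (gr r)) | r <- enum 'I_N]; split.
      by apply/allP => p /mapP [r _ ->] /=; apply: idx_alpha; apply: gr_deg.
    by rewrite big_map big_enum.
  move=> b Hb0; have [s <-] := rank_of Hb0.
  by rewrite -cA cAF mxE.
move=> u' [[sq [Hall ->]] Hd].
have [d Ed] := grouping Hall.
have dAF : d *m A = F.
  by apply/rowP => s; rewrite cA -Ed Hd ?gr_deg // mxE.
have -> : c = d by rewrite /c -dAF mulmxK // Aunit.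
by rewrite Ed.
Qed.
End Main.

Unset Implicit Arguments.
Set Strict Implicit.

Theorem mainTheorem11 (R : realFieldType) (n : nat) (v : 'I_n.+1 -> 'I_n -> R)
    (lam : 'I_n.+1 -> {mpoly R[n]}) (m k : nat) (i : 'I_n.+1) :
  simplex v -> barycentric v lam -> (2 * m + 1 <= k)%N ->
  forall f : 'X_{1..n} -> R,
    exists! u : {mpoly R[n]},
      PkD lam k i m u /\
      forall b : 'X_{1..n}, (mdeg b <= m)%N -> (mderivm b u).@[v i] = f b.
Proof.
move=> Hs Hb Hk' f.
have Hk : (m <= k)%N.
  by apply: leq_trans Hk'; rewrite mul2n -addnn -addnA leq_addr.
exact: main_sec.
Qed.
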